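(* Let $G$ and $H$ be finite simple graphs, neither of which is complete. Then for all vertices $(g,h),(g',h')$ of $G\diamond H$, either $d_{G\diamond H}((g,h),(g',h'))\le 3$ or $d_{G\diamond H}((g,h),(g',h'))=\infty$; moreover the latter can happen only when both $G$ and $H$ are disjoint unions of two complete graphs.
   Context: The modular product $G\diamond H$ has vertex set $V(G)\times V(H)$; distinct vertices $(g,h)$ and $(g',h')$ are adjacent iff ($g=g'$ and $hh'\in E(H)$), or ($gg'\in E(G)$ and $h=h'$), or ($gg'\in E(G)$ and $hh'\in E(H)$), or ($g\neq g'$, $h\neq h'$, $gg'\notin E(G)$ and $hh'\notin E(H)$). $d_X(u,v)$ is the usual graph distance, equal to $\infty$ if $u,v$ lie in different components. *)

(* Defs.v *)
From mathcomp Require Import all_boot.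
Set Implicit Arguments. Unset Strict Implicit. Unset Printing Implicit Defensive.

Definition simple_graph (T : finType) (e : rel T) : Prop :=
  symmetric e /\ irreflexive e.

Definition complete_graph (T : finType) (e : rel T) : Prop :=
  forall x y : T, x != y -> e x y.

Definition two_cliques (T : finType) (e : rel T) : Prop :=
  exists A : {set T}, [/\ A != set0, ~: A != set0 &
    forall x y : T, x != y -> e x y = ((x \in A) == (y \in A))].

Definition modprod (T1 T2 : finType) (eG : rel T1) (eH : rel T2) : rel (T1 * T2) :=
  fun x y =>
    (x != y) &&
    [|| ((x.1 == y.1) && eH x.2 y.2),
        (eG x.1 y.1 && (x.2 == y.2)),
        (eG x.1 y.1 && eH x.2 y.2)
      | [&& x.1 != y.1, x.2 != y.2, ~~ eG x.1 y.1 & ~~ eH x.2 y.2]].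

Definition dist_le (T : finType) (e : rel T) (u v : T) (k : nat) : Prop :=
  exists p : seq T, [/\ path e u p, last u p = v & size p <= k].

Definition dist_inf (T : finType) (e : rel T) (u v : T) : Prop :=
  ~~ connect e u v.

(* Main.v *)
Require Import Defs.
From mathcomp Require Import all_boot.
From Stdlib Require Import Classical.

Set Implicit Arguments. Unset Strict Implicit. Unset Printing Implicit Defensive.

Lemma adj1 (T1 T2 : finType) (eG : rel T1) (eH : rel T2) g h x y :
  (g == x) || eG g x -> (h == y) || eH h y -> (g != x) || (h != y) ->
  modprod eG eH (g,h) (x,y).
Proof.
rewrite /modprod /= xpair_eqE.
by case: (g == x); case: (h == y); case: (eG g x); case: (eH h y).
Qed.

Lemma adj2 (T1 T2 : finType) (eG : rel T1) (eH : rel T2) g h x y :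
  g != x -> ~~ eG g x -> h != y -> ~~ eH h y -> modprod eG eH (g,h) (x,y).
Proof.
rewrite /modprod /= xpair_eqE.
by case: (g == x); case: (h == y); case: (eG g x); case: (eH h y).
Qed.

Lemma neq_adj (T : finType) (e : rel T) a b : irreflexive e -> e a b -> a != b.
Proof. by move=> ir eab; apply/eqP=> E; move: eab; rewrite E ir. Qed.

Lemma dl0 (T : finType) (e : rel T) u : dist_le e u u 3.
Proof. by exists [::]. Qed.
Lemma dl1 (T : finType) (e : rel T) u v : e u v -> dist_le e u v 3.
Proof. by move=> H; exists [:: v]; rewrite /= H. Qed.
Lemma dl2 (T : finType) (e : rel T) u a v : e u a -> e a v -> dist_le e u v 3.
Proof. by move=> H1 H2; exists [:: a; v]; rewrite /= H1 H2. Qed.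
Lemma dl3 (T : finType) (e : rel T) u a b v :
  e u a -> e a b -> e b v -> dist_le e u v 3.
Proof. by move=> H1 H2 H3; exists [:: a; b; v]; rewrite /= H1 H2 H3. Qed.

Lemma core (T1 T2 : finType) (eG : rel T1) (eH : rel T2) g g' h h' :
  simple_graph eG -> simple_graph eH -> ~ complete_graph eG ->
  (g == g') || eG g g' -> h != h' -> ~~ eH h h' ->
  dist_le (modprod eG eH) (g,h) (g',h') 3 \/ (two_cliques eG /\ two_cliques eH).
Proof.
move=> [sG iG] [sH iH] ncG Hg Hh Hhh.
destruct (classic (dist_le (modprod eG eH) (g,h) (g',h') 3)) as [D|nD];
  [by left|right].
have nP1 : forall x, eG g x -> x != g' -> eG x g'.
  move=> x a b; apply/negPn/negP => c; apply: nD.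
  apply: (@dl2 _ _ _ (x,h)).
    by apply: adj1; rewrite ?(neq_adj iG a) ?eqxx ?a ?orbT.
  by apply: adj2.
have nP2 : forall x, x != g -> eG x g' -> eG g x.
  move=> x a b; apply/negPn/negP => c; apply: nD.
  apply: (@dl2 _ _ _ (x,h')).
    by apply: adj2; rewrite // eq_sym.
  by apply: adj1; rewrite ?(neq_adj iG b) ?eqxx ?b ?orbT.
have twin : forall x, x != g -> x != g' -> eG g x = eG x g'.
  by move=> x a b; apply/idP/idP => c; [exact: nP1 | exact: nP2].
have ni : forall x w, x != g -> ~~ eG g x -> eG x w -> eG w g' -> False.
  move=> x w a b c d; apply: nD.
  apply: (@dl3 _ _ _ (x,h') (w,h')).
      by apply: adj2; rewrite // eq_sym.
    by apply: adj1; rewrite ?(neq_adj iG c) ?eqxx ?c ?orbT.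
  by apply: adj1; rewrite ?(neq_adj iG d) ?eqxx ?d ?orbT.
have nii : forall w x, eG g w -> eG x g' -> w != x -> eG w x.
  move=> w x a b c; apply/negPn/negP => d; apply: nD.
  apply: (@dl3 _ _ _ (w,h) (x,h')).
      by apply: adj1; rewrite ?(neq_adj iG a) ?eqxx ?a ?orbT.
    by apply: adj2.
  by apply: adj1; rewrite ?(neq_adj iG b) ?eqxx ?b ?orbT.
have niii : forall x w, x != g -> ~~ eG g x -> w != g' -> ~~ eG w g' ->
    x != w -> eG x w.
  move=> x w a b c d k; apply/negPn/negP => m; apply: nD.
  apply: (@dl3 _ _ _ (x,h') (w,h)).
      by apply: adj2; rewrite // eq_sym.
    by apply: adj2; first [done | by rewrite eq_sym | by rewrite sH].
  by apply: adj2.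
set A := [set x | (x == g) || eG g x].
have gA : g \in A by rewrite inE eqxx.
have g'A : g' \in A by rewrite inE eq_sym.
have cA : forall x y, x \in A -> y \in A -> x != y -> eG x y.
  move=> x y; rewrite !inE => /orP[/eqP->|gx] /orP[/eqP->|gy] xy.
  - by rewrite eqxx in xy.
  - exact: gy.
  - by rewrite sG.
  - have yg : y != g by rewrite eq_sym (neq_adj iG gy).
    have xg : x != g by rewrite eq_sym (neq_adj iG gx).
    case: (eqVneq x g') => [E|xg'].
      by rewrite E sG -twin // -E eq_sym.
    case: (eqVneq y g') => [E|yg'].
      by rewrite E -twin.
    by apply: nii => //; rewrite -twin.
have cB : forall x y, x \notin A -> y \notin A -> x != y -> eG x y.
  move=> x y xA yA xy; move: (xA) (yA); rewrite !inE !negb_or.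
  move=> /andP[xg gx] /andP[yg gy].
  have yg' : y != g' by apply/eqP => E; move: yA; rewrite E g'A.
  by apply: niii => //; rewrite -twin.
have cC : forall x y, x \in A -> y \notin A -> ~~ eG x y.
  move=> x y xA yA; move: (xA) (yA); rewrite !inE negb_or.
  move=> /orP[/eqP->|gx] /andP[yg gy]; first exact: gy.
  have yg' : y != g' by apply/eqP => E; move: yA; rewrite E g'A.
  apply/negP => xy.
  case: (eqVneq x g') => [E|xg'].
    by move: gy; rewrite twin // -E sG xy.
  have xg : x != g by rewrite eq_sym (neq_adj iG gx).
  by apply: (ni y x) => //; [rewrite sG | rewrite -twin].
have charG : forall x y, x != y -> eG x y = ((x \in A) == (y \in A)).
  move=> x y xy.
  case: (boolP (x \in A)) => xA; case: (boolP (y \in A)) => yA.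
  - by rewrite cA.
  - by rewrite (negbTE (cC _ _ xA yA)).
  - by rewrite sG (negbTE (cC _ _ yA xA)).
  - by rewrite cB.
have cA0 : ~: A != set0.
  apply/negP => /eqP E; apply: ncG => a b ab; rewrite charG //.
  have : a \notin ~: A by rewrite E in_set0.
  have : b \notin ~: A by rewrite E in_set0.
  by rewrite !inE !negbK => -> ->.
have tG : two_cliques eG.
  by exists A; split => //; apply/set0Pn; exists g.
split => //.
case/set0Pn: cA0 => x0; rewrite inE => x0A.
have x0g : x0 != g by apply/eqP => E; move: x0A; rewrite E gA.
have x0g' : x0 != g' by apply/eqP => E; move: x0A; rewrite E g'A.
have gx0 : ~~ eG g x0 by rewrite charG ?gA ?(negbTE x0A) // eq_sym.
have x0ge : ~~ eG x0 g' by rewrite charG ?g'A ?(negbTE x0A).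
have nP3 : forall y, eH h y -> eH y h' -> False.
  move=> y a b; apply: nD; apply: (@dl2 _ _ _ (g,y)).
    by apply: adj1; rewrite ?(neq_adj iH a) ?eqxx ?a ?orbT.
  by apply: adj1; rewrite ?(neq_adj iH b) ?b ?orbT.
have nP4 : forall y, y != h -> ~~ eH h y -> y != h' -> eH y h'.
  move=> y a b c; apply/negPn/negP => d; apply: nD.
  apply: (@dl2 _ _ _ (x0,y)).
    by apply: adj2; rewrite // eq_sym.
  by apply: adj2.
have nQ1 : forall y z, eH h y -> eH y z -> eH z h' -> False.
  move=> y z a b c; apply: nD; apply: (@dl3 _ _ _ (g,y) (g,z)).
      by apply: adj1; rewrite ?(neq_adj iH a) ?eqxx ?a ?orbT.
    by apply: adj1; rewrite ?(neq_adj iH b) ?eqxx ?b ?orbT.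
  by apply: adj1; rewrite ?(neq_adj iH c) ?c ?orbT.
have nA : forall y1 y2, eH h y1 -> y1 != y2 -> y2 != h' -> ~~ eH y2 h' ->
    eH y1 y2.
  move=> y1 y2 a b c d; apply/negPn/negP => k; apply: nD.
  apply: (@dl3 _ _ _ (g,y1) (x0,y2)).
      by apply: adj1; rewrite ?(neq_adj iH a) ?eqxx ?a ?orbT.
    by apply: adj2; rewrite // eq_sym.
  by apply: adj2.
have nB : forall y1 y2, eH y1 h' -> y2 != y1 -> h != y2 -> ~~ eH h y2 ->
    eH y2 y1.
  move=> y1 y2 a b c d; apply/negPn/negP => k; apply: nD.
  apply: (@dl3 _ _ _ (x0,y2) (g',y1)).
      by apply: adj2; rewrite // eq_sym.
    by apply: adj2.
  by apply: adj1; rewrite ?(neq_adj iH a) ?eqxx ?a ?orbT.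
set C := [set y | (y == h) || eH h y].
have hC : h \in C by rewrite inE eqxx.
have notC : forall y, y \notin C -> (y == h') || eH y h'.
  move=> y; rewrite inE negb_or => /andP[yh hy].
  case: (eqVneq y h') => //= yh'; exact: nP4.
have inC : forall y, y \in C -> (y != h') && ~~ eH y h'.
  move=> y; rewrite inE => /orP[/eqP->|hy]; first by rewrite Hh Hhh.
  apply/andP; split.
    by apply/eqP => E; move: hy; rewrite E (negbTE Hhh).
  by apply/negP => yh'; exact: nP3 y hy yh'.
have h'C : h' \notin C by apply/negP => /inC; rewrite eqxx.
have dA : forall x y, x \in C -> y \in C -> x != y -> eH x y.
  move=> x y xC yC; move: (xC) (yC) (inC y yC); rewrite !inE.
  move=> /orP[/eqP->|hx] /orP[/eqP->|hy] /andP[yh' nyh'] xy.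
  - by rewrite eqxx in xy.
  - exact: hy.
  - by rewrite sH.
  - exact: nA.
have dB : forall x y, x \notin C -> y \notin C -> x != y -> eH x y.
  move=> x y xC yC xy; move: (xC) (yC); rewrite !inE !negb_or.
  move=> /andP[xh hx] /andP[yh hy].
  case/orP: (notC x xC) => [/eqP Ex|xh']; case/orP: (notC y yC) => [/eqP Ey|yh'].
  - by rewrite Ex Ey eqxx in xy.
  - by rewrite Ex sH.
  - by rewrite Ey.
  - by rewrite sH; apply: nB => //; rewrite eq_sym.
have dC : forall x y, x \in C -> y \notin C -> ~~ eH x y.
  move=> x y xC yC; case/andP: (inC x xC) => xh' nxh'.
  case/orP: (notC y yC) => [/eqP ->|yh'] //.
  move: (xC) (yC); rewrite !inE negb_or => /orP[/eqP->|hx] /andP[yh hy] //.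
  by apply/negP => xy; exact: nQ1 x y hx xy yh'.
exists C; split.
- by apply/set0Pn; exists h.
- by apply/set0Pn; exists h'; rewrite inE.
- move=> x y xy.
  case: (boolP (x \in C)) => xC; case: (boolP (y \in C)) => yC.
  + by rewrite dA.
  + by rewrite (negbTE (dC _ _ xC yC)).
  + by rewrite sH (negbTE (dC _ _ yC xC)).
  + by rewrite dB.
Qed.

Definition swp (A B : Type) (x : A * B) : B * A := (x.2, x.1).

Lemma mpswap (T1 T2 : finType) (eG : rel T1) (eH : rel T2) (x y : T1 * T2) :
  modprod eH eG (swp x) (swp y) = modprod eG eH x y.
Proof.
case: x y => [a b] [c d]; rewrite /modprod /= !xpair_eqE.
by case: (a == c); case: (b == d); case: (eG a c); case: (eH b d).
Qed.

Lemma dl_swap (T1 T2 : finType) (eG : rel T1) (eH : rel T2) g h g' h' :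
  dist_le (modprod eH eG) (h,g) (h',g') 3 ->
  dist_le (modprod eG eH) (g,h) (g',h') 3.
Proof.
case=> p [pp lp sp]; exists (map (@swp _ _) p); split.
- have : forall q u, path (modprod eH eG) u q ->
      path (modprod eG eH) (swp u) (map (@swp _ _) q).
    elim=> //= a q IH u /andP[ua qa].
    by rewrite mpswap ua /=; apply: IH.
  by move=> /(_ p (h,g) pp).
- by rewrite -[(g,h)]/(swp (h,g)) last_map lp.
- by rewrite size_map.
Qed.

Lemma mainL (T1 T2 : finType) (eG : rel T1) (eH : rel T2) :
  simple_graph eG -> simple_graph eH ->
  ~ complete_graph eG -> ~ complete_graph eH ->
  forall u v, dist_le (modprod eG eH) u v 3 \/ (two_cliques eG /\ two_cliques eH).
Proof.
move=> sg sh ncG ncH [g h] [g' h'].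
case: (eqVneq (g,h) (g',h')) => [->|uv]; first by left; apply: dl0.
case: (boolP (modprod eG eH (g,h) (g',h'))) => [adj|nadj].
  by left; apply: dl1.
rewrite xpair_eqE negb_and in uv.
case: (boolP ((g == g') || eG g g')) => Hg.
  case: (boolP ((h == h') || eH h h')) => Hh.
    by move: nadj; rewrite adj1.
  move: Hh; rewrite negb_or => /andP[h1 h2]; exact: core.
move: Hg; rewrite negb_or => /andP[g1 g2].
case: (boolP ((h == h') || eH h h')) => Hh.
  case: (core sh sg ncH Hh g1 g2) => [D|[t1 t2]]; last by right.
  by left; apply: dl_swap.
move: Hh; rewrite negb_or => /andP[h1 h2].
by move: nadj; rewrite adj2.
Qed.

Lemma tcL (T1 T2 : finType) (eG : rel T1) (eH : rel T2) :
  simple_graph eG -> simple_graph eH ->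
  two_cliques eG -> two_cliques eH ->
  forall u v, dist_le (modprod eG eH) u v 3 \/ dist_inf (modprod eG eH) u v.
Proof.
move=> [sG iG] [sH iH] [A [_ _ cA]] [C [_ _ cC]].
pose par (x : T1 * T2) := (x.1 \in A) == (x.2 \in C).
have inv : forall x y, modprod eG eH x y -> par x = par y.
  case=> a b [c d]; rewrite /modprod /par /= => /andP[_ H].
  case/or4P: H.
  - case/andP=> /eqP -> bd.
    have := cC b d (neq_adj iH bd); rewrite bd => /esym/eqP ->; done.
  - case/andP=> ac /eqP ->.
    have := cA a c (neq_adj iG ac); rewrite ac => /esym/eqP ->; done.
  - case/andP=> ac bd.
    have := cC b d (neq_adj iH bd); rewrite bd => /esym/eqP ->.
    have := cA a c (neq_adj iG ac); rewrite ac => /esym/eqP ->; done.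
  - case/and4P=> ac bd nac nbd.
    rewrite cA // in nac; rewrite cC // in nbd.
    move: nac nbd; case: (a \in A); case: (c \in A); case: (b \in C); case: (d \in C) => //.
move=> [g h] [g' h'].
case: (boolP (par (g,h) == par (g',h'))) => pe.
  left.
  case: (eqVneq (g,h) (g',h')) => [->|uv]; first by apply: dl0.
  apply: dl1.
  rewrite xpair_eqE negb_and in uv.
  rewrite /par /= in pe.
  case: (boolP ((g \in A) == (g' \in A))) => sg.
    have sh : (h \in C) == (h' \in C).
      by move: sg pe; case: (g \in A); case: (g' \in A); case: (h \in C); case: (h' \in C).
    apply: adj1 => //.
      by case: (eqVneq g g') => //= gg; rewrite cA.
    by case: (eqVneq h h') => //= hh; rewrite cC.
  have sh : ~~ ((h \in C) == (h' \in C)).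
    by move: sg pe; case: (g \in A); case: (g' \in A); case: (h \in C); case: (h' \in C).
  have gg : g != g' by apply/eqP => E'; rewrite E' eqxx in sg.
  have hh : h != h' by apply/eqP => E'; rewrite E' eqxx in sh.
  by apply: adj2; rewrite // ?cA ?cC.
right; apply/negP => /connectP [p pp lp].
have : forall q x, path (modprod eG eH) x q -> par (last x q) = par x.
  elim=> //= a q IH x /andP[xa qa]; rewrite IH //; exact/esym/inv.
move=> /(_ p (g,h) pp); rewrite -lp => E.
by rewrite E eqxx in pe.
Qed.

Theorem mainTheorem3 (T1 T2 : finType) (eG : rel T1) (eH : rel T2) :
  simple_graph eG -> simple_graph eH ->
  ~ complete_graph eG -> ~ complete_graph eH ->
  (forall u v : T1 * T2,
      dist_le (modprod eG eH) u v 3 \/ dist_inf (modprod eG eH) u v) /\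
  ((exists u v : T1 * T2, dist_inf (modprod eG eH) u v) ->
      two_cliques eG /\ two_cliques eH).
Proof.
move=> sg sh ncG ncH; split.
  move=> u v; case: (mainL sg sh ncG ncH u v) => [D|[tG tH]]; first by left.
  exact: tcL.
move=> [u [v inf]]; case: (mainL sg sh ncG ncH u v) => [D|//].
exfalso; move: inf; rewrite /dist_inf; case: D => p [pp lp _].
move/negP; apply; apply/connectP; exists p => //; by rewrite lp.
Qed.
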